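(* Let $\varphi:\mathcal X\to\mathbb C^N$ be a feature map, $H$ a Hermitian $N\times N$ matrix, and $g(x)=\varphi(x)^*H\varphi(x)$. Then for every $Q\in\mathcal P(\mathcal X)$, \[L^{\mathrm{OPT}}_g(Q)=\sup_{\tilde Q\in\mathcal P(\mathcal X):\ \Sigma_{\tilde Q}=\Sigma_Q}L_g(\tilde Q).\]
   Context: $\mathcal X=[0,1]^d$; $\mathcal P(\mathcal X)$ is the set of probability measures on $\mathcal X$; $\varphi$ is assumed such that the integrals below exist (e.g. bounded measurable). For $Q\in\mathcal P(\mathcal X)$, $L_g(Q)=\log\int_{\mathcal X}e^{g(x)}\,dQ(x)$ and $\Sigma_Q=\int_{\mathcal X}\varphi(x)\varphi(x)^*\,dQ(x)$. With $D_{\mathrm{KL}}(P\|Q)=\int\log(dP/dQ)\,dP$, define $D^{\mathrm{OPT}}_{\mathrm{KL}}(\Sigma_P\|\Sigma_Q)=\inf\{D_{\mathrm{KL}}(\tilde P\|\tilde Q):\tilde P,\tilde Q\in\mathcal P(\mathcal X),\ \Sigma_{\tilde P}=\Sigma_P,\ \Sigma_{\tilde Q}=\Sigma_Q\}$ and $L^{\mathrm{OPT}}_g(Q)=\sup_{P\in\mathcal P(\mathcal X)}\big(\int_{\mathcal X}g\,dP-D^{\mathrm{OPT}}_{\mathrm{KL}}(\Sigma_P\|\Sigma_Q)\big)$. *)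

(* Defs.v *)
From HB Require Import structures.
From mathcomp Require Import all_boot all_order all_algebra.
From mathcomp Require Import all_classical all_reals all_analysis.
From mathcomp Require Import complex sesquilinear.
Unset Printing Implicit Defensive.
Import Order.TTheory GRing.Theory Num.Theory.
Local Open Scope classical_set_scope.
Local Open Scope ring_scope.
Local Open Scope charge_scope.

(* The ambient space is R^d = d.-tuple R with its product Borel sigma-algebra;
   X = [0,1]^d is the unitcube below, and P(X) is modelled as the probability
   measures on R^d giving full mass to the unitcube. *)
Definition unitcube {R : realType} (d : nat) : set (d.-tuple R) :=
  [set x | forall i : 'I_d, 0 <= tnth x i <= 1].

Definition probX {R : realType} (d : nat) : set (probability (d.-tuple R) R) :=
  [set P : probability (d.-tuple R) R | P (unitcube d) = 1%E].

Definition feature_ok {R : realType} {d N : nat}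
    (phi : d.-tuple R -> 'cV[R[i]]_N) : Prop :=
  (forall k : 'I_N, measurable_fun (unitcube d) (fun x => complex.Re (phi x k 0))) /\
  (forall k : 'I_N, measurable_fun (unitcube d) (fun x => complex.Im (phi x k 0))) /\
  (exists M : R, forall x, unitcube d x -> forall k : 'I_N,
      `|complex.Re (phi x k 0)| <= M /\ `|complex.Im (phi x k 0)| <= M).

Definition cintegral {R : realType} {d : nat} (P : probability (d.-tuple R) R)
    (f : d.-tuple R -> R[i]) : R[i] :=
  Complex (Rintegral P (unitcube d) (fun x => complex.Re (f x)))
          (Rintegral P (unitcube d) (fun x => complex.Im (f x))).

Definition Sigma {R : realType} {d N : nat} (phi : d.-tuple R -> 'cV[R[i]]_N)
    (Q : probability (d.-tuple R) R) : 'M[R[i]]_N :=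
  \matrix_(k, l) cintegral Q (fun x => phi x k 0 * (phi x l 0)^*).

(* g(x) = phi(x)^* H phi(x)  (real since H is Hermitian; we take its real part) *)
Definition gquad {R : realType} {d N : nat} (phi : d.-tuple R -> 'cV[R[i]]_N)
    (H : 'M[R[i]]_N) (x : d.-tuple R) : R :=
  complex.Re ((map_mx (fun z => z^*) (phi x)^T *m H *m phi x) 0 0).

Definition Lg {R : realType} {d : nat} (g : d.-tuple R -> R)
    (Q : probability (d.-tuple R) R) : R :=
  ln (Rintegral Q (unitcube d) (fun x => expR (g x))).

Definition KL {R : realType} {d : nat} (P Q : probability (d.-tuple R) R) : \bar R :=
  if `[< P `<< Q >] then
    (\int[P]_(x in unitcube d) (ln (fine (('d (charge_of_finite_measure P) '/d Q) x)))%:E)%E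
  else +oo%E.

Definition DOPT {R : realType} {d N : nat} (phi : d.-tuple R -> 'cV[R[i]]_N)
    (S1 S2 : 'M[R[i]]_N) : \bar R :=
  ereal_inf [set e | exists P Q : probability (d.-tuple R) R,
    [/\ probX d P, Sigma phi P = S1, probX d Q, Sigma phi Q = S2 & KL P Q = e]].

Definition LOPT {R : realType} {d N : nat} (phi : d.-tuple R -> 'cV[R[i]]_N)
    (g : d.-tuple R -> R) (Q : probability (d.-tuple R) R) : \bar R :=
  ereal_sup [set ((Rintegral P (unitcube d) g)%:E - DOPT phi (Sigma phi P) (Sigma phi Q))%E
            | P in probX d].

(* Main.v *)
Require Import Defs.
From HB Require Import structures.
From mathcomp Require Import all_boot all_order all_algebra.
From mathcomp Require Import all_classical all_reals all_analysis.
From mathcomp Require Import complex sesquilinear.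
From mathcomp Require Import ring lra.
From mathcomp Require Import measurable_realfun.
Import Order.TTheory GRing.Theory Num.Theory.
Import numFieldNormedType.Exports.
Local Open Scope classical_set_scope.
Local Open Scope ring_scope.

Local Open Scope charge_scope.
Lemma measurable_unitcube (R : realType) (d : nat) :
  measurable (unitcube d : set (d.-tuple R)).
Proof.
have -> : unitcube d = \bigcap_(i in [set: 'I_d]) ((@tnth d R)^~ i @^-1` `[0, 1]).
  apply/seteqP; split => x /=.
    by move=> H i _ /=; rewrite in_itv /= H.
  by move=> H i; have := H i I; rewrite /= in_itv.
apply: fin_bigcap_measurable => // i _; rewrite -[X in measurable X]setTI.
by apply: measurable_tnth => //.
Qed.

Lemma ereal_swap (R : realType) (a : R) (x y : \bar R) :
  (a%:E - y <= x)%E -> (a%:E - x <= y)%E.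
Proof.
case: x => [x||]; case: y => [y||] //=.
all: try by rewrite ?leey ?leNye.
rewrite -!EFinD !lee_fin => h; lra.
Qed.

Section ae_transfer.
Context {d} {T : measurableType d} {R : realType}.
Lemma ae_transfer {P Q : {measure set T -> \bar R}} {Pr : T -> Prop} :
  P `<< Q -> {ae Q, forall x, Pr x} -> {ae P, forall x, Pr x}.
Proof.
move=> /null_content_dominatesP PQ [N [mN QN sub]]; exists N; split => //.
exact: PQ.
Qed.
End ae_transfer.
Section mono.
Context d (T : measurableType d) (R : realType).
Local Open Scope ereal_scope.
Lemma ae_le_integral_gen (mu : {measure set T -> \bar R}) (D : set T)
  (f h : T -> \bar R) : measurable D ->
  measurable_fun D f -> measurable_fun D h ->
  {ae mu, forall x, D x -> h x <= f x} ->
  \int[mu]_(x in D) h x <= \int[mu]_(x in D) f x.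
Proof.
move=> mD mf mh ae; rewrite (integralE _ _ h) (integralE _ _ f).
apply: leeB.
- apply: ae_ge0_le_integral => //; try exact: measurable_funepos.
  apply: (filterS _ ae) => x H Dx; rewrite !funeposE.
  by apply: le_max2 => //; exact: H.
- apply: ae_ge0_le_integral => //; try exact: measurable_funeneg.
  apply: (filterS _ ae) => x H Dx; rewrite !funenegE.
  by apply: le_max2 => //; rewrite leeN2; exact: H.
Qed.
End mono.
Section gibbs.
Context {R : realType} {d : nat}.
Local Notation T := (d.-tuple R).
Local Notation U := (unitcube d : set T).

Lemma bounded_integrable (P : probability T R) (f : T -> R) :
  measurable_fun U f -> (exists M, forall x, U x -> `|f x| <= M) ->
  P.-integrable U (EFin \o f).
Proof.
move=> mf [M hM]; have mU := measurable_unitcube R d.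
apply: measurable_bounded_integrable => //.
- by rewrite (le_lt_trans (probability_le1 _ mU)) ?ltry.
- exists M; split; first exact: num_real.
  by move=> y My x Ux; exact: le_trans (hM x Ux) (ltW My).
Qed.

Lemma ln_ineq (a r z : R) : 0 < r ->
  a - z + 1 - expR (a - ln r - z) <= ln r.
Proof.
move=> r0; set t := a - ln r - z.
have h1 : -1 < expR t - 1 by have := expR_gt0 t; lra.
have := le_ln1Dx h1.
have -> : 1 + (expR t - 1) = expR t by ring.
rewrite expRK /t => h; lra.
Qed.

End gibbs.

Lemma Rint_EFin d (T : measurableType d) (R : realType) (mu : {measure set T -> \bar R})
  (D : set T) (f : T -> R) : measurable D -> mu.-integrable D (EFin \o f) ->
  (\int[mu]_(x in D) (f x)%:E)%E = (\int[mu]_(x in D) f x)%:E.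
Proof. by move=> mD fi; rewrite /Rintegral fineK // integrable_fin_num. Qed.
Section gibbs2.
Context {R : realType} {d : nat}.
Local Notation T := (d.-tuple R).
Local Notation U := (unitcube d : set T).

Lemma gibbs_ineq (g : T -> R) (P Q : probability T R) :
  measurable_fun U g -> (exists M, forall x, U x -> `|g x| <= M) ->
  P U = 1%E -> Q U = 1%E ->
  ((\int[P]_(x in U) g x)%:E - KL P Q <= (Lg g Q)%:E)%E.
Proof.
move=> mg [M gM] PU QU.
have mU := measurable_unitcube R d.
rewrite /KL; case: asboolP => [PQ|_]; last by rewrite /= leNye.
set rho := Radon_Nikodym_SigmaFinite.f P Q.
have rho0 := Radon_Nikodym_SigmaFinite.f_ge0 PQ.
have rhofin := Radon_Nikodym_SigmaFinite.f_fin_num PQ.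
have rhoint := Radon_Nikodym_SigmaFinite.f_integrable PQ.
have mrho : measurable_fun setT rho := measurable_int _ rhoint.
have rhoP := Radon_Nikodym_SigmaFinite.f_integral PQ.
have mfine : measurable_fun [set: \bar R] fine := fine_measurable measurableT.
have -> : (\int[P]_(x in U) (ln (fine (('d (charge_of_finite_measure P) '/d Q) x)))%:E
    = \int[P]_(x in U) (ln (fine (rho x)))%:E)%E.
  apply: ae_eq_integral => //.
  - apply/measurable_EFinP; apply: measurableT_comp; first exact: measurable_ln.
    apply: measurableT_comp => //; exact: measurable_funTS.
  - apply/measurable_EFinP; apply: measurableT_comp; first exact: measurable_ln.
    apply: measurableT_comp => //; exact: measurable_funTS.
  - have := ae_eq_Radon_Nikodym_SigmaFinite PQ mU.
    move/(ae_transfer PQ); apply: filterS => x H Ux; by rewrite /rho H.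
set r := fun x => fine (rho x).
have r0 x : 0 <= r x by exact: fine_ge0.
have rhoE x : rho x = (r x)%:E by rewrite /r fineK.
have mr : measurable_fun setT r := measurableT_comp mfine mrho.
rewrite /Lg; set Z := \int[Q]_(x in U) expR (g x).
have meg : measurable_fun U (fun x => expR (g x)).
  by have := measurableT_comp (@measurable_expR R) mg.
have iegQ : Q.-integrable U (EFin \o (fun x => expR (g x))).
  apply: bounded_integrable => //; exists (expR M) => x Ux.
  rewrite ger0_norm ?expR_ge0 // ler_expR.
  exact: le_trans (ler_norm _) (gM x Ux).
have Zge : expR (- M) <= Z.
  have := le_Rintegral mU (finite_measure_integrable_cst Q (expR (-M)) mU) iegQ.
  rewrite Rintegral_cst // (_ : fine (Q U) = 1); last by rewrite QU.
  rewrite mulr1; apply => x Ux.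
  by rewrite ler_expR; exact: lerNnormlW (gM x Ux).
have Z0 : 0 < Z := lt_le_trans (expR_gt0 _) Zge.
set k := fun x => expR (g x - ln (r x) - ln Z).
have mlnr : measurable_fun U (fun x => ln (r x)).
  by have := measurableT_comp (@measurable_ln R) (measurable_funTS mr).
have mk : measurable_fun U k.
  apply: (measurableT_comp (@measurable_expR R)).
  apply: measurable_funB => //; apply: measurable_funB => //.
have mN : measurable (U `&` [set x | r x = 0]).
  apply: measurableI => //.
  by have := mr measurableT [set 0%R] (measurable_set1 0%R); rewrite setTI.
have Pnull : P (U `&` [set x | r x = 0]) = 0%E.
  rewrite rhoP //; apply: integral0_eq => x [_ /= rx0].
  by rewrite (rhoE x : Radon_Nikodym_SigmaFinite.f P Q x = _) rx0.
have ae1 : {ae P, forall x, U x -> ((g x + (1 - ln Z) - k x)%:E <= (ln (r x))%:E)%E}.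
  exists (U `&` [set x | r x = 0]); split => //.
  move=> x /= /not_implyP [Ux H]; split => //.
  apply: contrapT => rx0; apply: H; rewrite lee_fin.
  have rpos : 0 < r x by rewrite lt_neqAle eq_sym r0 andbT; apply/eqP.
  have -> : g x + (1 - ln Z) - k x = g x - ln Z + 1 - k x by ring.
  exact: ln_ineq.
have iexpQ : Q.-integrable U (EFin \o (fun x => expR (g x - ln Z))).
  apply: bounded_integrable.
    by have := measurableT_comp (@measurable_expR R) (measurable_funB mg (measurable_cst (ln Z))).
  exists (expR (M - ln Z)) => x Ux.
  rewrite ger0_norm ?expR_ge0 // ler_expR lerD2r.
  exact: le_trans (ler_norm _) (gM x Ux).
have int1 : (\int[Q]_(x in U) (expR (g x - ln Z))%:E = 1)%E.
  rewrite Rint_EFin //.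
  rewrite (@eq_Rintegral _ _ _ Q U (fun x => expR (g x) * Z^-1)); last first.
    by move=> x _; rewrite expRB lnK // posrE.
  by rewrite RintegralZr // mulfV // gt_eqF.
have ikle : (\int[P]_(x in U) (k x)%:E <= 1)%E.
  rewrite -(Radon_Nikodym_SigmaFinite.change_of_variables PQ (f := fun x => (k x)%:E)) //; last 2 first.
    by move=> x; rewrite lee_fin expR_ge0.
    exact/measurable_EFinP.
  rewrite -int1; apply: ge0_le_integral => //.
  - by move=> x _; rewrite mule_ge0 // lee_fin expR_ge0.
  - apply: emeasurable_funM; first exact/measurable_EFinP.
    exact: measurable_funTS.
  - apply/measurable_EFinP.
    by have := measurableT_comp (@measurable_expR R) (measurable_funB mg (measurable_cst (ln Z))).
  - move=> x Ux; rewrite (rhoE x : Radon_Nikodym_SigmaFinite.f P Q x = _) -EFinM lee_fin.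
    have [rx0|rx0] := eqVneq (r x) 0.
      by rewrite rx0 mulr0 expR_ge0.
    have rpos : 0 < r x by rewrite lt_neqAle eq_sym rx0 r0.
    have e : expR (ln (r x)) = r x by rewrite lnK // posrE.
    rewrite -[X in _ * X <= _]e -expRD /k.
    by have -> : g x - ln (r x) - ln Z + ln (r x) = g x - ln Z by ring.
have ik : P.-integrable U (EFin \o k).
  apply/integrableP; split; first exact/measurable_EFinP.
  under eq_integral => x _ do rewrite /= ger0_norm ?expR_ge0 //.
  exact: le_lt_trans ikle (ltry _).
have ig1 : P.-integrable U (EFin \o (fun x => g x + (1 - ln Z))).
  apply: bounded_integrable.
    exact: measurable_funD mg (measurable_cst _).
  exists (M + `|1 - ln Z|) => x Ux.
  exact: le_trans (ler_normD _ _) (lerD (gM x Ux) (lexx _)).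
have ig : P.-integrable U (EFin \o g) by apply: bounded_integrable => //; exists M.
have ih : P.-integrable U (EFin \o (fun x => g x + (1 - ln Z) - k x)).
  by have := integrableB mU ig1 ik.
have key : ((\int[P]_(x in U) (g x + (1 - ln Z) - k x))%:E
    <= \int[P]_(x in U) (ln (r x))%:E)%E.
  rewrite -Rint_EFin //; apply: ae_le_integral_gen => //.
  - exact/measurable_EFinP.
  - apply/measurable_EFinP; apply: measurable_funB => //.
    exact: measurable_funD mg (measurable_cst _).
have icst := finite_measure_integrable_cst P (1 - ln Z) mU.
rewrite RintegralB // RintegralD // Rintegral_cst // in key.
rewrite (_ : fine (P U) = 1) in key; last by rewrite PU.
have kle : \int[P]_(x in U) k x <= 1 by rewrite -lee_fin -Rint_EFin.
apply: le_trans (leeB (lexx _) key) _.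
rewrite -EFinB lee_fin; lra.
Qed.
End gibbs2.
Section density_measure.
Context {d} {T : measurableType d} {R : realType}.
Variables (Q : probability T R) (w : T -> R).
Hypotheses (w0 : forall x, 0 <= w x) (mw : measurable_fun setT w)
  (w1 : (\int[Q]_x (w x)%:E = 1)%E).

Definition dens (A : set T) : \bar R := (\int[Q]_(x in A) (w x)%:E)%E.

Let dens0 : dens set0 = 0%E.
Proof. by rewrite /dens integral_set0. Qed.

Let dens_ge0 A : (0 <= dens A)%E.
Proof. by apply: integral_ge0 => x _; rewrite lee_fin. Qed.

Let dens_sigma_additive : semi_sigma_additive dens.
Proof.
move=> /= F mF tF mUF; rewrite /dens ge0_integral_bigcup //.
- apply: is_cvg_ereal_nneg_natsum_cond => n _ _.
  by apply: integral_ge0 => x _; rewrite lee_fin.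
- exact/measurable_EFinP/measurable_funTS.
- by move=> x _; rewrite lee_fin.
Qed.

HB.instance Definition _ := isMeasure.Build _ _ _ dens
  dens0 dens_ge0 dens_sigma_additive.

Let densT : dens [set: T] = 1%E.
Proof. exact: w1. Qed.

HB.instance Definition _ := @Measure_isProbability.Build _ _ R dens densT.

Lemma dens_dominates : dens `<< Q.
Proof.
apply/null_content_dominatesP => A mA QA0.
apply: null_set_integral => //; exact/measurable_EFinP/measurable_funTS.
Qed.

Lemma dens_exists : exists P : probability T R,
  (forall A, P A = \int[Q]_(x in A) (w x)%:E)%E /\ P `<< Q.
Proof. by exists (dens : probability T R); split => //; exact: dens_dominates. Qed.

End density_measure.
Section gibbs3.
Context {R : realType} {d : nat}.
Local Notation T := (d.-tuple R).
Local Notation U := (unitcube d : set T).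

Lemma KL_SF (P Q : probability T R) : P `<< Q ->
  KL P Q = (\int[P]_(x in U) (ln (fine (Radon_Nikodym_SigmaFinite.f P Q x)))%:E)%E.
Proof.
move=> PQ; have mU := measurable_unitcube R d.
rewrite /KL; case: asboolP => // _.
have rhoint := Radon_Nikodym_SigmaFinite.f_integrable PQ.
have mrho : measurable_fun setT (Radon_Nikodym_SigmaFinite.f P Q) := measurable_int _ rhoint.
have mfine : measurable_fun [set: \bar R] fine := fine_measurable measurableT.
apply: ae_eq_integral => //.
- apply/measurable_EFinP; apply: measurableT_comp; first exact: measurable_ln.
  apply: measurableT_comp => //; exact: measurable_funTS.
- apply/measurable_EFinP; apply: measurableT_comp; first exact: measurable_ln.
  apply: measurableT_comp => //; exact: measurable_funTS.
- have := ae_eq_Radon_Nikodym_SigmaFinite PQ mU.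
  move/(ae_transfer PQ); apply: filterS => x H Ux; by rewrite H.
Qed.

Lemma gibbs_attain (g : T -> R) (Q : probability T R) :
  measurable_fun U g -> (exists M, forall x, U x -> `|g x| <= M) ->
  Q U = 1%E ->
  exists P : probability T R, P U = 1%E /\
    ((\int[P]_(x in U) g x)%:E - KL P Q = (Lg g Q)%:E)%E.
Proof.
move=> mg [M gM] QU.
have mU := measurable_unitcube R d.
rewrite /Lg; set Z := \int[Q]_(x in U) expR (g x).
have meg : measurable_fun U (fun x => expR (g x)).
  by have := measurableT_comp (@measurable_expR R) mg.
have iegQ : Q.-integrable U (EFin \o (fun x => expR (g x))).
  apply: bounded_integrable => //; exists (expR M) => x Ux.
  rewrite ger0_norm ?expR_ge0 // ler_expR.
  exact: le_trans (ler_norm _) (gM x Ux).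
have Zge : expR (- M) <= Z.
  have := le_Rintegral mU (finite_measure_integrable_cst Q (expR (-M)) mU) iegQ.
  rewrite Rintegral_cst // (_ : fine (Q U) = 1); last by rewrite QU.
  rewrite mulr1; apply => x Ux.
  by rewrite ler_expR; exact: lerNnormlW (gM x Ux).
have Z0 : 0 < Z := lt_le_trans (expR_gt0 _) Zge.
set e := fun x => expR (g x - ln Z).
have me : measurable_fun U e.
  by have := measurableT_comp (@measurable_expR R) (measurable_funB mg (measurable_cst (ln Z))).
have iexpQ : Q.-integrable U (EFin \o e).
  apply: bounded_integrable => //.
  exists (expR (M - ln Z)) => x Ux.
  rewrite ger0_norm ?expR_ge0 // ler_expR lerD2r.
  exact: le_trans (ler_norm _) (gM x Ux).
have int1 : (\int[Q]_(x in U) (e x)%:E = 1)%E.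
  rewrite Rint_EFin //.
  rewrite (@eq_Rintegral _ _ _ Q U (fun x => expR (g x) * Z^-1)); last first.
    by move=> x _; rewrite /e expRB lnK // posrE.
  by rewrite RintegralZr // mulfV // gt_eqF.
set w := e \_ U.
have w0 x : 0 <= w x.
  by rewrite /w /patch; case: ifP => _ //; rewrite expR_ge0.
have mw : measurable_fun setT w by apply/(measurable_restrictT _ mU).
have wE : (fun x => (w x)%:E) = (EFin \o e) \_ U by rewrite restrict_EFin.
have w1 : (\int[Q]_x (w x)%:E = 1)%E by rewrite wE -integral_mkcond.
have [P [PE PQ]] := @dens_exists _ _ _ Q w w0 mw w1.
have PU : P U = 1%E.
  rewrite PE -int1; apply: eq_integral => x xU.
  by rewrite /w /patch xU.
exists P; split => //.
rewrite KL_SF //.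
have rhoint := Radon_Nikodym_SigmaFinite.f_integrable PQ.
have mrho : measurable_fun setT (Radon_Nikodym_SigmaFinite.f P Q) := measurable_int _ rhoint.
have mfine : measurable_fun [set: \bar R] fine := fine_measurable measurableT.
have iw : Q.-integrable setT (EFin \o w).
  apply/integrableP; split; first exact/measurable_EFinP.
  under eq_integral => x _ do rewrite /= ger0_norm //.
  by rewrite w1 ltry.
have aeQ : ae_eq Q setT (EFin \o w) (Radon_Nikodym_SigmaFinite.f P Q).
  apply: integral_ae_eq => // E _ mE.
  rewrite -(Radon_Nikodym_SigmaFinite.f_integral PQ mE); exact/esym/PE.
have aeP := ae_transfer PQ aeQ.
have -> : (\int[P]_(x in U) (ln (fine (Radon_Nikodym_SigmaFinite.f P Q x)))%:E
    = \int[P]_(x in U) (g x - ln Z)%:E)%E.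
  apply: ae_eq_integral => //.
  all: try (apply/measurable_EFinP; apply: measurableT_comp; first exact: measurable_ln;
    apply: measurableT_comp => //; exact: measurable_funTS).
  all: try (apply/measurable_EFinP; apply: measurable_funB => //; fail).
  apply: filterS aeP => x H Ux.
    by rewrite -(H I) /= /w /patch mem_set // /e expRK.
have ig' : P.-integrable U (EFin \o (fun x => g x - ln Z)).
  apply: bounded_integrable; first exact: measurable_funB mg (measurable_cst _).
  exists (M + `|ln Z|) => x Ux.
  exact: le_trans (ler_normB _ _) (lerD (gM x Ux) (lexx _)).
have ig : P.-integrable U (EFin \o g) by apply: bounded_integrable => //; exists M.
have icst := finite_measure_integrable_cst P (ln Z) mU.
rewrite Rint_EFin // RintegralB // Rintegral_cst //.
rewrite (_ : fine (P U) = 1); last by rewrite PU.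
rewrite -EFinB; congr EFin; lra.
Qed.
End gibbs3.
Lemma Rintegral_sum d (T : measurableType d) (R : realType)
  (mu : {measure set T -> \bar R}) (D : set T) (I : Type) (s : seq I)
  (F : I -> T -> R) : measurable D ->
  (forall i, mu.-integrable D (EFin \o F i)) ->
  \int[mu]_(x in D) (\sum_(i <- s) F i x) = \sum_(i <- s) \int[mu]_(x in D) F i x.
Proof.
move=> mD iF; elim: s => [|i s ih].
  under eq_Rintegral do rewrite big_nil.
  by rewrite Rintegral_cst // mul0r big_nil.
under eq_Rintegral do rewrite big_cons.
rewrite RintegralD //; first by rewrite ih big_cons.
apply: (eq_integrable mD (fun x => \sum_(j <- s) (F j x)%:E)).
  by move=> x _; rewrite /= sumEFin.
by apply: integrable_sum => // j _; exact: iF.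
Qed.

Lemma Rintegrable_sum d (T : measurableType d) (R : realType)
  (mu : {measure set T -> \bar R}) (D : set T) (I : Type) (s : seq I)
  (F : I -> T -> R) : measurable D ->
  (forall i, mu.-integrable D (EFin \o F i)) ->
  mu.-integrable D (EFin \o (fun x => \sum_(i <- s) F i x)).
Proof.
move=> mD iF; apply: (eq_integrable mD (fun x => \sum_(j <- s) (F j x)%:E)).
  by move=> x _; rewrite /= sumEFin.
by apply: integrable_sum => // j _; exact: iF.
Qed.

Lemma Rint_lin d (T : measurableType d) (R : realType)
  (mu : {measure set T -> \bar R}) (D : set T) (a b : R) (f h : T -> R) :
  measurable D -> mu.-integrable D (EFin \o f) -> mu.-integrable D (EFin \o h) ->
  \int[mu]_(x in D) (a * f x - b * h x) =
  a * \int[mu]_(x in D) f x - b * \int[mu]_(x in D) h x.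
Proof.
move=> mD fi hi.
have afi : mu.-integrable D (EFin \o (fun x => a * f x)).
  apply: (eq_integrable mD (fun x => a%:E * (f x)%:E)%E) => //.
  exact: integrableZl.
have bhi : mu.-integrable D (EFin \o (fun x => b * h x)).
  apply: (eq_integrable mD (fun x => b%:E * (h x)%:E)%E) => //.
  exact: integrableZl.
by rewrite RintegralB // RintegralZl // RintegralZl.
Qed.
Section quad.
Context {R : realType} {d N : nat} (phi : d.-tuple R -> 'cV[R[i]]_N)
  (H : 'M[R[i]]_N).
Local Notation T := (d.-tuple R).
Local Notation U := (unitcube d : set T).

Let z l k x := phi x l 0 * (phi x k 0)^*.

Lemma Re_conjM (a b : R[i]) :
  complex.Re (a * b^*) = complex.Re a * complex.Re b + complex.Im a * complex.Im b.
Proof. by case: a => a1 a2; case: b => b1 b2 /=; ring. Qed.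

Lemma Im_conjM (a b : R[i]) :
  complex.Im (a * b^*) = complex.Im a * complex.Re b - complex.Re a * complex.Im b.
Proof. by case: a => a1 a2; case: b => b1 b2 /=; ring. Qed.

Lemma ReM' (a b : R[i]) :
  complex.Re (a * b) = complex.Re a * complex.Re b - complex.Im a * complex.Im b.
Proof. by case: a => a1 a2; case: b => b1 b2 /=; ring. Qed.

Lemma ReD' (a b : R[i]) : complex.Re (a + b) = complex.Re a + complex.Re b.
Proof. by case: a => a1 a2; case: b => b1 b2. Qed.

Lemma Re0' : complex.Re (0 : R[i]) = 0.
Proof. by []. Qed.

Lemma gquadE x : gquad phi H x =
  \sum_(l < N) \sum_(k < N) (complex.Re (H k l) * complex.Re (z l k x)
                            - complex.Im (H k l) * complex.Im (z l k x)).
Proof.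
rewrite /gquad mxE (big_morph _ ReD' Re0'); apply: eq_bigr => l _.
rewrite mxE big_distrl /= (big_morph _ ReD' Re0'); apply: eq_bigr => k _.
rewrite !mxE -ReM'; congr complex.Re; rewrite /z; ring.
Qed.

Hypothesis hphi : feature_ok phi.

Lemma z_meas l k :
  measurable_fun U (fun x => complex.Re (z l k x)) /\
  measurable_fun U (fun x => complex.Im (z l k x)).
Proof.
case: hphi => mRe [mIm _]; split.
- rewrite /z (_ : (fun x => _) = (fun x => complex.Re (phi x l 0) * complex.Re (phi x k 0)
     + complex.Im (phi x l 0) * complex.Im (phi x k 0))); last first.
    by apply/funext => x; rewrite Re_conjM.
  by apply: measurable_funD; apply: measurable_funM.
- rewrite /z (_ : (fun x => _) = (fun x => complex.Im (phi x l 0) * complex.Re (phi x k 0)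
     - complex.Re (phi x l 0) * complex.Im (phi x k 0))); last first.
    by apply/funext => x; rewrite Im_conjM.
  by apply: measurable_funB; apply: measurable_funM.
Qed.

Lemma z_bound : exists B, forall l k x, U x ->
  `|complex.Re (z l k x)| <= B /\ `|complex.Im (z l k x)| <= B.
Proof.
case: hphi => _ [_ [M hM]]; exists (M * M + M * M) => l k x Ux.
have [h1 h2] := hM x Ux l; have [h3 h4] := hM x Ux k.
split; rewrite /z ?Re_conjM ?Im_conjM.
- apply: le_trans (ler_normD _ _) _; rewrite !normrM.
  by apply: lerD; apply: ler_pM.
- apply: le_trans (ler_normB _ _) _; rewrite !normrM.
  by apply: lerD; apply: ler_pM.
Qed.

Lemma z_integrable (P : probability T R) l k :
  P.-integrable U (EFin \o (fun x => complex.Re (z l k x))) /\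
  P.-integrable U (EFin \o (fun x => complex.Im (z l k x))).
Proof.
have [m1 m2] := z_meas l k; have [B hB] := z_bound.
split; apply: bounded_integrable => //; exists B => x Ux; by case: (hB l k x Ux).
Qed.

Lemma gquad_meas : measurable_fun U (gquad phi H).
Proof.
rewrite (_ : gquad phi H = fun x => \sum_(l < N) \sum_(k < N) (complex.Re (H k l) * complex.Re (z l k x)
                            - complex.Im (H k l) * complex.Im (z l k x))); last first.
  by apply/funext => x; rewrite gquadE.
apply: measurable_sum => l; apply: measurable_sum => k.
have [m1 m2] := z_meas l k.
by apply: measurable_funB; apply: measurable_funM.
Qed.

Lemma gquad_bound : exists M, forall x, U x -> `|gquad phi H x| <= M.
Proof.
have [B hB] := z_bound.
exists (\sum_(l < N) \sum_(k < N) (`|complex.Re (H k l)| * B + `|complex.Im (H k l)| * B)).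
move=> x Ux; rewrite gquadE.
apply: le_trans (ler_norm_sum _ _ _) _; apply: ler_sum => l _.
apply: le_trans (ler_norm_sum _ _ _) _; apply: ler_sum => k _.
have [h1 h2] := hB l k x Ux.
apply: le_trans (ler_normB _ _) _; rewrite !normrM.
by apply: lerD; apply: ler_wpM2l.
Qed.

Lemma lin_int (P : probability T R) l k :
  P.-integrable U (EFin \o (fun x => complex.Re (H k l) * complex.Re (z l k x)
          - complex.Im (H k l) * complex.Im (z l k x))).
Proof.
have mU := measurable_unitcube R d.
have [i1 i2] := z_integrable P l k.
have a1 : P.-integrable U (EFin \o (fun x => complex.Re (H k l) * complex.Re (z l k x))).
  apply: (eq_integrable mU (fun x => (complex.Re (H k l))%:E * (complex.Re (z l k x))%:E)%E).
    by move=> x _.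
  exact: integrableZl.
have a2 : P.-integrable U (EFin \o (fun x => complex.Im (H k l) * complex.Im (z l k x))).
  apply: (eq_integrable mU (fun x => (complex.Im (H k l))%:E * (complex.Im (z l k x))%:E)%E).
    by move=> x _.
  exact: integrableZl.
have := integrableB mU a1 a2.
by apply: eq_integrable.
Qed.

Lemma int_gquad (P : probability T R) :
  \int[P]_(x in U) gquad phi H x =
  \sum_(l < N) \sum_(k < N) (complex.Re (H k l) * complex.Re (Sigma phi P l k)
                            - complex.Im (H k l) * complex.Im (Sigma phi P l k)).
Proof.
have mU := measurable_unitcube R d.
under eq_Rintegral do rewrite gquadE.
rewrite Rintegral_sum //; last first.
  by move=> l; apply: Rintegrable_sum => // k; exact: lin_int.
apply: eq_bigr => l _.
rewrite Rintegral_sum //; last by move=> k; exact: lin_int.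
apply: eq_bigr => k _.
have [i1 i2] := z_integrable P l k.
by rewrite Rint_lin // /Sigma mxE.
Qed.

End quad.
Theorem lemma22 (R : realType) (d N : nat)
    (phi : d.-tuple R -> 'cV[R[i]]_N) (H : 'M[R[i]]_N) :
  feature_ok phi ->
  H \is hermsymmx ->
  forall Q : probability (d.-tuple R) R, probX d Q ->
  LOPT phi (gquad phi H) Q =
  ereal_sup [set (Lg (gquad phi H) Qt)%:E
            | Qt in [set Qt | probX d Qt /\ Sigma phi Qt = Sigma phi Q]].
Proof.
move=> hphi _ Q hQ.
have mg := gquad_meas phi H hphi.
have gB := gquad_bound phi H hphi.
have intE (P P' : probability (d.-tuple R) R) : Sigma phi P = Sigma phi P' ->
    \int[P]_(x in unitcube d) gquad phi H x = \int[P']_(x in unitcube d) gquad phi H x.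
  by move=> SP; rewrite !(int_gquad phi H hphi) SP.
apply/eqP; rewrite eq_le; apply/andP; split.
- apply/ereal_supP => _ [P hP <-].
  apply: ereal_swap; apply/ereal_infP => _ [P' [Q' [hP' SP' hQ' SQ' <-]]].
  apply: ereal_swap.
  rewrite (intE P P' (esym SP')).
  apply: le_trans (gibbs_ineq _ _ _ mg gB hP' hQ') _.
  by apply: le_ereal_sup_tmp; exists (Lg (gquad phi H) Q')%:E => //; exists Q'.
- apply/ereal_supP => _ [Qt [hQt SQt] <-].
  have [P [PU eq]] := gibbs_attain _ _ mg gB hQt.
  rewrite -eq; apply: le_ereal_sup_tmp.
  exists ((\int[P]_(x in unitcube d) gquad phi H x)%:E -
          DOPT phi (Sigma phi P) (Sigma phi Q))%E; first by exists P.
  apply: leeB => //; apply: ge_ereal_inf.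
  by exists (KL P Qt) => //; exists P, Qt.
Qed.
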